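(* Let $n$ and $x$ be positive integers with $x\le n$, and let $\mathcal M=\{M_1,\dots,M_s\}$ be a collection of perfect matchings of the complete graph $K_{2n}$. If $$s<\frac{x!}{2^x}\cdot\frac{\binom{2n}{x}\binom{2n-x}{x}}{\binom{n}{x}^2},$$ then there exists a perfect matching $M$ of $K_{2n}$ such that $|M\cap M_i|\le x-1$ for every $i\in\{1,\dots,s\}$.
   Context: A perfect matching of $K_{2n}$ is a set of $n$ pairwise vertex-disjoint edges covering all $2n$ vertices. A perfect matching $M$ ''agrees with $M_i$ in at most $x-1$ edges'' means $|M\cap M_i|\le x-1$. *)

(* Defs.v *)
From mathcomp Require Import all_boot all_order all_algebra.
Set Implicit Arguments. Unset Strict Implicit. Unset Printing Implicit Defensive.

Definition is_edge (m : nat) (e : {set 'I_m}) : bool := #|e| == 2.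

Definition perfect_matching (m : nat) (M : {set {set 'I_m}}) : bool :=
  [forall e in M, is_edge e] &&
  [forall v : 'I_m, #|[set e in M | v \in e]| == 1].

(* Main.v *)
From mathcomp Require Import all_boot all_order all_algebra.
Require Import Defs.
From Stdlib Require Import ArithRing Lia.
Set Implicit Arguments. Unset Strict Implicit. Unset Printing Implicit Defensive.

Section PM.
Variable T : finType.
Implicit Types (V : {set T}) (M F : {set {set T}}) (e : {set T}).

Definition pmV V : {set {set {set T}}} :=
  [set M : {set {set T}} | [forall e in M, (#|e| == 2) && (e \subset V)] &&
      [forall v in V, #|[set e in M | v \in e]| == 1]].

Lemma pm_edge V M e : M \in pmV V -> e \in M -> #|e| = 2 /\ e \subset V.
Proof.
rewrite inE => /andP[/forallP H _] eM.
by have /implyP/(_ eM)/andP[/eqP -> ->] := H e.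
Qed.

Lemma pm_cover V M v : M \in pmV V -> v \in V -> exists2 e, e \in M & v \in e.
Proof.
rewrite inE => /andP[_ /forallP H] vV.
have /implyP/(_ vV)/cards1P[e0 He0] := H v.
have : e0 \in [set e in M | v \in e] by rewrite He0 set11.
by rewrite inE => /andP[? ?]; exists e0.
Qed.

Lemma pm_uniq V M e1 e2 v : M \in pmV V -> e1 \in M -> e2 \in M ->
  v \in e1 -> v \in e2 -> e1 = e2.
Proof.
move=> MP e1M e2M v1 v2.
have vV : v \in V by have [_ /subsetP] := pm_edge MP e1M; apply.
move: MP; rewrite inE => /andP[_ /forallP H].
have /implyP/(_ vV)/cards1P[e0 He0] := H v.
have : e1 \in [set e in M | v \in e] by rewrite inE e1M v1.
have : e2 \in [set e in M | v \in e] by rewrite inE e2M v2.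
by rewrite He0 !inE => /eqP -> /eqP ->.
Qed.

Lemma pmI V M :
  (forall e, e \in M -> #|e| = 2 /\ e \subset V) ->
  (forall v, v \in V -> exists2 e, e \in M & v \in e) ->
  (forall e1 e2 v, e1 \in M -> e2 \in M -> v \in e1 -> v \in e2 -> e1 = e2) ->
  M \in pmV V.
Proof.
move=> H1 H2 H3; rewrite inE; apply/andP; split.
  by apply/forallP => e; apply/implyP => eM; have [-> ->] := H1 e eM.
apply/forallP => v; apply/implyP => vV; apply/cards1P.
have [e eM ve] := H2 v vV; exists e; apply/setP => f.
rewrite !inE; apply/andP/eqP => [[fM vf]|->]; first exact: H3 fM eM vf ve.
by [].
Qed.

Lemma pm_remove V M F : M \in pmV V -> F \subset M ->
  M :\: F \in pmV (V :\: cover F).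
Proof.
move=> MP FM; apply: pmI.
- move=> e; rewrite inE => /andP[eF eM]; have [e2 eV] := pm_edge MP eM; split=> //.
  apply/subsetP => u ue; rewrite inE (subsetP eV) // andbT.
  apply/negP => /bigcupP[f fF uf].
  have fM := subsetP FM f fF.
  by move: eF; rewrite (pm_uniq MP eM fM ue uf) fF.
- move=> v; rewrite inE => /andP[vF vV].
  have [e eM ve] := pm_cover MP vV; exists e => //.
  rewrite inE eM andbT; apply/negP => eF; move/negP: vF; apply.
  by apply/bigcupP; exists e.
- move=> e1 e2 v; rewrite !inE => /andP[_ h1] /andP[_ h2]; exact: pm_uniq MP h1 h2.
Qed.

Lemma pm_add V M e : e \subset V -> #|e| = 2 -> M \in pmV (V :\: e) ->
  e |: M \in pmV V.
Proof.
move=> eV e2 MP.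
have disj : forall f u, f \in M -> u \in f -> u \notin e.
  move=> f u fM uf; have [_ /subsetP fV] := pm_edge MP fM.
  by have := fV u uf; rewrite inE => /andP[].
apply: pmI.
- move=> f; rewrite !inE => /orP[/eqP->|fM]; first by [].
  have [f2 fV] := pm_edge MP fM; split=> //; apply: subset_trans fV (subsetDl _ _).
- move=> v vV; case: (boolP (v \in e)) => ve; first by exists e; rewrite ?setU11.
  have [|f fM vf] := pm_cover (v:=v) MP; first by rewrite inE ve.
  by exists f => //; rewrite inE fM orbT.
- move=> e1 e2' v; rewrite !inE => /orP[/eqP->|h1] /orP[/eqP->|h2] v1 v2 //.
  + by move: (disj _ _ h2 v2); rewrite v1.
  + by move: (disj _ _ h1 v1); rewrite v2.
  + exact: pm_uniq MP h1 h2 v1 v2.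
Qed.

Lemma pm_trivI V M : M \in pmV V -> trivIset M.
Proof.
move=> MP; apply/trivIsetP => A B AM BM neq.
rewrite -setI_eq0; apply/eqP/setP => u; rewrite !inE.
apply: negbTE; apply/andP => -[uA uB].
by rewrite (pm_uniq MP AM BM uA uB) eqxx in neq.
Qed.

Lemma pm_card_cover V M F : M \in pmV V -> F \subset M -> #|cover F| = #|F| * 2.
Proof.
move=> MP FM; apply: card_uniform_partition.
- by move=> e eF; have [] := pm_edge MP (subsetP FM e eF).
- rewrite /partition eqxx (trivIsetS FM (pm_trivI MP)) /=.
  apply/negP => /(subsetP FM) /(pm_edge MP) [h _].
  by rewrite cards0 in h.
Qed.

Lemma pm_coverE V M : M \in pmV V -> cover M = V.
Proof.
move=> MP; apply/setP => u; apply/bigcupP/idP => [[e eM ue]|uV].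
  by have [_ /subsetP] := pm_edge MP eM; apply.
by have [e eM ue] := pm_cover MP uV; exists e.
Qed.

Fixpoint df k := if k is k'.+1 then k'.*2.+1 * df k' else 1.

Lemma fiber_card V v w : v \in V -> w \in V -> w != v ->
  #|[set M in pmV V | [set v; w] \in M]| = #|pmV (V :\: [set v; w])|.
Proof.
move=> vV wV wv; set e := [set v; w].
have eV : e \subset V by apply/subsetP => u; rewrite !inE => /orP[]/eqP->.
have e2 : #|e| = 2 by rewrite cards2 eq_sym wv.
rewrite -(card_in_imset (f := fun M => M :\ e)); last first.
  move=> M1 M2; rewrite !inE => /andP[_ h1] /andP[_ h2] eq.
  by rewrite -(setD1K h1) eq setD1K.
suff -> : [set M :\ e | M in [set M in pmV V | e \in M]] = pmV (V :\: e) by [].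
apply/eqP; rewrite eqEsubset; apply/andP; split.
  apply/subsetP => y /imsetP[M]; rewrite inE => /andP[MP eM] ->.
  have := pm_remove MP (F := [set e]); rewrite cover1; apply.
  by rewrite sub1set.
apply/subsetP => M MP; apply/imsetP; exists (e |: M).
  by rewrite inE pm_add // setU11.
rewrite setU1K //; apply/negP => eM.
have [_ /subsetP] := pm_edge MP eM; move/(_ v); rewrite !inE eqxx /=.
by move/(_ isT).
Qed.

Lemma card_pm k V : #|V| = k.*2 -> #|pmV V| = df k.
Proof.
elim: k V => [|k IH] V hV /=.
  move/cards0_eq: hV => ->; apply/eqP/cards1P; exists set0.
  apply/eqP; rewrite eqEsubset; apply/andP; split; apply/subsetP => M.
    move=> MP; rewrite inE; apply/eqP/setP => e; rewrite in_set0.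
    apply/negbTE/negP => eM; have [h eV] := pm_edge MP eM.
    by move: eV; rewrite subset0 => /eqP ee; rewrite ee cards0 in h.
  rewrite inE => /eqP ->; apply: pmI => [e|v|e1 e2 v]; by rewrite ?in_set0.
have [v vV] : exists v, v \in V.
  by apply/set0Pn; rewrite -card_gt0 hV.
pose W := V :\ v.
have HW : #|W| = (k.*2).+1 by move: hV; rewrite (cardsD1 v V) vV add1n doubleS; case.
have step : forall M, M \in pmV V -> \sum_(w in W) ([set v; w] \in M : nat) = 1.
  move=> M MP; have [e eM ve] := pm_cover MP vV.
  have [e2 eV] := pm_edge MP eM.
  have [w ew wv] : exists2 w, e = [set v; w] & w != v.
    move: e2; rewrite (cardsD1 v) ve add1n => -[] /eqP/cards1P[w hw].
    have wev : w \in e :\ v by rewrite hw set11.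
    exists w; last by move: wev; rewrite !inE => /andP[].
    apply/setP => u; rewrite !inE; case: (eqVneq u v) => [->|uv] /=; first by rewrite ve.
    by have /setP/(_ u) := hw; rewrite !inE uv /= => ->.
  have wW : w \in W by rewrite !inE wv (subsetP eV) // ew !inE eqxx orbT.
  rewrite (bigD1 w) //= -ew eM big1 // => u /andP[uW uw].
  apply/eqP; rewrite eqb0; apply/negP => hu.
  have := pm_uniq (v:=v) MP hu eM (setU11 _ _) ve.
  move/setP/(_ u); rewrite ew !inE eqxx orbT (negbTE uw) orbF.
  by move: uW; rewrite !inE => /andP[/negbTE -> _].
transitivity (\sum_(M in pmV V) \sum_(w in W) ([set v; w] \in M : nat)).
  by rewrite -sum1_card; apply: eq_bigr => M MP; rewrite step.
rewrite exchange_big /=.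
transitivity (\sum_(w in W) df k); last by rewrite sum_nat_const HW.
apply: eq_bigr => w; rewrite !inE => /andP[wv wV].
rewrite -big_mkcondr /= sum1dep_card.
have -> : [set M | (M \in pmV V) && ([set v; w] \in M)] =
  [set M in pmV V | [set v; w] \in M] by [].
rewrite fiber_card // IH // cardsD.
have eV : [set v; w] \subset V by apply/subsetP => u; rewrite !inE => /orP[]/eqP->.
rewrite (setIidPr eV) cards2 eq_sym wv hV doubleS; case: (k.*2) => // m; rewrite /= subSS subn1.
Qed.
End PM.
Lemma union_bound (I T : finType) (A : {pred I}) (B : I -> {set T}) :
  #|\bigcup_(i in A) B i| <= \sum_(i in A) #|B i|.
Proof.
elim/big_ind2: _ => [|S1 k1 S2 k2 h1 h2|i _]; first by rewrite cards0.
2: by [].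
apply: leq_trans (leq_add h1 h2).
by rewrite cardsU leq_subr.
Qed.
Lemma dummy_ub : True. Proof.
by [].
Qed.

Lemma pm_sub_bound (T : finType) (V : {set T}) (F : {set {set T}}) :
  #|[set M in pmV V | F \subset M]| <= #|pmV (V :\: cover F)|.
Proof.
rewrite -(card_in_imset (f := fun M => M :\: F)); last first.
  move=> M1 M2; rewrite !inE => /andP[_ h1] /andP[_ h2] eq.
  by rewrite -(setID M1 F) -(setID M2 F) (setIidPr h1) (setIidPr h2) eq.
apply: subset_leq_card; apply/subsetP => y /imsetP[M]; rewrite inE.
by move=> /andP[MP FM] ->; apply: pm_remove.
Qed.

Lemma pmE m (M : {set {set 'I_m}}) : perfect_matching M = (M \in pmV [set: 'I_m]).
Proof.
rewrite /perfect_matching inE; congr (_ && _); apply: eq_forallb => e /=.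
  by rewrite /is_edge subsetT andbT.
by rewrite in_setT.
Qed.

Lemma df_gt0 k : 0 < df k.
Proof. by elim: k => //= k IH; rewrite muln_gt0 IH. Qed.

Lemma df_fact m : df m * (2 ^ m * m`!) = (m.*2)`!.
Proof.
elim: m => // m IH.
rewrite doubleS !factS -IH /= expnS.
move: (df m) (2 ^ m) (m`!) => a p f.
rewrite -addnn -!multE -!plusE; ring.
Qed.

Lemma key n x : x <= n ->
  x`! * ('C(2 * n, x) * 'C(2 * n - x, x)) * df (n - x) = 2 ^ x * 'C(n, x) * df n.
Proof.
move=> hxn.
have K0 : 0 < 2 ^ (n - x) * (n - x)`! * x`!.
  by rewrite !muln_gt0 expn_gt0 !fact_gt0.
apply/eqP; rewrite -(eqn_pmul2r K0); apply/eqP.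
have hx2 : x <= 2 * n by move/leP: hxn => h; apply/leP; rewrite -multE; lia.
have hx3 : x <= 2 * n - x by move/leP: hxn => h; apply/leP; rewrite -multE -minusE; lia.
have h1 := bin_fact hx2.
have h2 := bin_fact hx3.
have h3 := bin_fact hxn.
have h4 := df_fact (n - x).
have h5 := df_fact n.
have e1 : 2 * n - x - x = (n - x).*2 by rewrite -subnDA addnn doubleB mul2n.
have e2 : 2 ^ n = 2 ^ x * 2 ^ (n - x) by rewrite -expnD subnKC.
transitivity ((2 * n)`!).
  have -> : x`! * ('C(2 * n, x) * 'C(2 * n - x, x)) * df (n - x) *
     (2 ^ (n - x) * (n - x)`! * x`!) = 'C(2 * n, x) * (x`! * ('C(2 * n - x, x) *
     (x`! * (df (n - x) * (2 ^ (n - x) * (n - x)`!))))).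
    move: ('C(2 * n, x)) ('C(2 * n - x, x)) (df (n - x)) (2 ^ (n - x)) ((n - x)`!) (x`!).
    move=> a b c d f g; rewrite -!multE; ring.
  by rewrite h4 -e1 h2 h1.
have -> : 2 ^ x * 'C(n, x) * df n * (2 ^ (n - x) * (n - x)`! * x`!) =
   df n * ((2 ^ x * 2 ^ (n - x)) * ('C(n, x) * (x`! * (n - x)`!))).
  move: ('C(n, x)) (df n) (2 ^ (n - x)) ((n - x)`!) (x`!) (2 ^ x).
  move=> a b c d f g; rewrite -!multE; ring.
by rewrite h3 -e2 h5 mul2n.
Qed.

Import GRing.Theory Num.Theory.

Lemma pm_card_n n (M : {set {set 'I_(2 * n)}}) : M \in pmV [set: 'I_(2 * n)] -> #|M| = n.
Proof.
move=> MP; have := pm_card_cover MP (subxx M).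
rewrite (pm_coverE MP) cardsT card_ord => /eqP.
by rewrite muln2 -mul2n eqn_mul2l /= => /eqP.
Qed.

Theorem theorem2 (n x s : nat) (hx : 0 < x) (hxn : x <= n)
  (Ms : 'I_s -> {set {set 'I_(2 * n)}})
  (hMs : forall i, perfect_matching (Ms i))
  (hs : ((s%:R : rat) <
        ((x`!)%:R / (2 ^ x)%:R) *
        (('C(2 * n, x) * 'C(2 * n - x, x))%:R / ('C(n, x) ^ 2)%:R))%R) :
  exists M : {set {set 'I_(2 * n)}},
    perfect_matching M /\ forall i, #|M :&: Ms i| <= x - 1.
Proof.
pose P := pmV [set: 'I_(2 * n)].
have cardT : #|[set: 'I_(2 * n)]| = n.*2 by rewrite cardsT card_ord mul2n.
have cP : #|P| = df n := card_pm cardT.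
have hMs' : forall i, Ms i \in P by move=> i; rewrite -pmE.
pose Bad i := [set M in P | x <= #|M :&: Ms i|].
have bB : forall i, #|Bad i| <= 'C(n, x) * df (n - x).
  move=> i; set N := Ms i; have NP : N \in P := hMs' i.
  have cN : #|N| = n by apply: pm_card_n.
  pose Fs := [set F : {set {set 'I_(2 * n)}} | F \subset N & #|F| == x].
  have cFs : #|Fs| = 'C(n, x) by rewrite cards_draws cN.
  apply: (@leq_trans #|\bigcup_(F in Fs) [set M in P | F \subset M]|).
    apply: subset_leq_card; apply/subsetP => M; rewrite inE => /andP[MP hxM].
    have : 0 < #|[set F : {set {set 'I_(2 * n)}} | F \subset M :&: N & #|F| == x]| by rewrite cards_draws bin_gt0.
    rewrite card_gt0 => /set0Pn[F]; rewrite inE => /andP[FMN /eqP cF].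
    apply/bigcupP; exists F.
      by rewrite inE cF eqxx andbT (subset_trans FMN (subsetIr _ _)).
    by rewrite inE MP (subset_trans FMN (subsetIl _ _)).
  apply: leq_trans (union_bound _ _) _.
  rewrite -cFs -sum_nat_const; apply: leq_sum => F; rewrite inE => /andP[FN /eqP cF].
  apply: leq_trans (pm_sub_bound _ F) _.
  rewrite (card_pm (k := n - x)) //.
  by rewrite cardsD setTI cardT (pm_card_cover NP FN) cF muln2 -doubleB.
have pos : (0 < ((2 ^ x)%:R * ('C(n, x) ^ 2)%:R :> rat))%R.
  by rewrite -natrM ltr0n muln_gt0 expn_gt0 expn_gt0 bin_gt0 hxn.
rewrite mulf_div ltr_pdivlMr // -!natrM ltr_nat in hs.
have hlt : s * ('C(n, x) * df (n - x)) < df n.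
  have pos2 : 0 < 2 ^ x * 'C(n, x) by rewrite muln_gt0 expn_gt0 bin_gt0 hxn.
  rewrite -(ltn_pmul2r pos2).
  have -> : df n * (2 ^ x * 'C(n, x)) = x`! * ('C(2 * n, x) * 'C(2 * n - x, x)) * df (n - x).
    by rewrite key // mulnC.
  have -> : s * ('C(n, x) * df (n - x)) * (2 ^ x * 'C(n, x)) =
     s * (2 ^ x * 'C(n, x) ^ 2) * df (n - x).
    move: ('C(n, x)) (df (n - x)) (2 ^ x) => a b c.
    rewrite expnS expn1 -!multE; ring.
  by rewrite ltn_pmul2r ?df_gt0.
pose Ball := \bigcup_(i in [set: 'I_s]) Bad i.
have hcard : #|Ball| < #|P|.
  apply: leq_ltn_trans (union_bound _ _) _.
  apply: leq_ltn_trans (_ : _ <= \sum_(i in [set: 'I_s]) ('C(n, x) * df (n - x))) _.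
    by apply: leq_sum => i _; exact: bB.
  by rewrite sum_nat_const cardsT card_ord cP.
have nsub : ~~ (P \subset Ball).
  by apply/negP => /subset_leq_card; rewrite leqNgt hcard.
case/subsetPn: nsub => M MP nB.
exists M; split; first by rewrite pmE.
move=> i; have : M \notin Bad i.
  by apply: contra nB => h; apply/bigcupP; exists i; rewrite ?in_setT.
rewrite inE MP /= -ltnNge => h.
by rewrite subn1 -ltnS prednK.
Qed.
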